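(* For any 2-CNF $\Phi$, the pruned 2-CNF $\hat\Phi$ is satisfiable.
   Context: A 2-CNF is a conjunction of clauses, each clause being the disjunction of two literals on two distinct variables. A clause $l\vee\neg l'$ is read as the implication $l'\to l$. For a 2-CNF $\Phi$ and a set $\mathcal L_0$ of literals, define $\mathcal L(\Phi,\mathcal L_0)$ as the output of Unit Clause Propagation: start with $\mathcal L=\mathcal L_0$ and, as long as $\Phi$ contains a clause $l\vee\neg l'$ with $l'\in\mathcal L$ and $l\notin\mathcal L$, add $l$ to $\mathcal L$. Let $\mathcal V_0(\Phi,\mathcal L_0)$ be the set of variables $x$ with both $x,\neg x\in\mathcal L(\Phi,\mathcal L_0)$. The set of conflict clauses $\mathcal C(\Phi,\mathcal L_0)$ is the set of clauses $a$ of $\Phi$ all of whose variables lie in $\mathcal V_0(\Phi,\mathcal L_0)$. The pruned formula $\hat\Phi$ is obtained from $\Phi$ by deleting all clauses in $\bigcup_l\mathcal C(\Phi,\{l\})$, where the union ranges over all literals $l\in\{x,\neg x\}$ with $x$ a variable of $\Phi$. *)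

(* Defs.v *)
From Stdlib Require Import List.
Import ListNotations.

Inductive lit : Type := Pos (x : nat) | Neg (x : nat).

Definition var (l : lit) : nat := match l with Pos x => x | Neg x => x end.
Definition neg (l : lit) : lit := match l with Pos x => Neg x | Neg x => Pos x end.

Definition clause : Type := (lit * lit)%type.
Definition cnf : Type := list clause.

Definition is_2cnf (Phi : cnf) : Prop :=
  forall c, In c Phi -> var (fst c) <> var (snd c).

Definition clause_vars (c : clause) : list nat := [var (fst c); var (snd c)].

Definition var_of (Phi : cnf) (x : nat) : Prop :=
  exists c, In c Phi /\ In x (clause_vars c).

(* Output of Unit Clause Propagation L(Phi, L0): the least set containing L0
   and closed under: for a clause l \/ ~l' of Phi with l' in L, add l.
   A clause (a, b) = a \/ b can be written l \/ ~l' in two ways: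
   l = a, l' = neg b, or l = b, l' = neg a. *)
Inductive ucp (Phi : cnf) (L0 : lit -> Prop) : lit -> Prop :=
| ucp_init : forall l, L0 l -> ucp Phi L0 l
| ucp_left : forall a b, In (a, b) Phi -> ucp Phi L0 (neg b) -> ucp Phi L0 a
| ucp_right : forall a b, In (a, b) Phi -> ucp Phi L0 (neg a) -> ucp Phi L0 b.

Definition V0 (Phi : cnf) (L0 : lit -> Prop) (x : nat) : Prop :=
  ucp Phi L0 (Pos x) /\ ucp Phi L0 (Neg x).

Definition conflict_clause (Phi : cnf) (L0 : lit -> Prop) (c : clause) : Prop :=
  In c Phi /\ forall x, In x (clause_vars c) -> V0 Phi L0 x.

Definition pruned_away (Phi : cnf) (c : clause) : Prop :=
  exists l, var_of Phi (var l) /\ conflict_clause Phi (fun l' => l' = l) c.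

(* Clauses of the pruned formula \hat Phi. *)
Definition in_pruned (Phi : cnf) (c : clause) : Prop :=
  In c Phi /\ ~ pruned_away Phi c.

Definition lit_true (s : nat -> bool) (l : lit) : bool :=
  match l with Pos x => s x | Neg x => negb (s x) end.
Definition clause_true (s : nat -> bool) (c : clause) : Prop :=
  lit_true s (fst c) = true \/ lit_true s (snd c) = true.

Definition satisfiable (F : clause -> Prop) : Prop :=
  exists s : nat -> bool, forall c, F c -> clause_true s c.

(* Main.v *)
Require Import Defs.
From Stdlib Require Import Bool List Classical ClassicalEpsilon Lia.
Import ListNotations.

Lemma neg_neg : forall l, neg (neg l) = l.
Proof. destruct l; reflexivity. Qed.

Lemma ucp_mono : forall F F' L k, (forall c, In c F' -> In c F) ->
  ucp F' L k -> ucp F L k.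
Proof.
  intros F F' L k Hs H; induction H.
  - now apply ucp_init.
  - eapply ucp_left; eauto.
  - eapply ucp_right; eauto.
Qed.

Lemma ucp_trans : forall F a b c, ucp F (fun l => l = a) b ->
  ucp F (fun l => l = b) c -> ucp F (fun l => l = a) c.
Proof.
  intros F a b c H1 H2; induction H2.
  - subst; exact H1.
  - eapply ucp_left; eauto.
  - eapply ucp_right; eauto.
Qed.

Lemma ucp_contra : forall F m k, ucp F (fun l => l = m) k ->
  ucp F (fun l => l = neg k) (neg m).
Proof.
  intros F m k H; induction H.
  - subst; now apply ucp_init.
  - apply ucp_trans with b.
    + eapply ucp_right; eauto. now apply ucp_init.
    + rewrite neg_neg in IHucp; exact IHucp.
  - apply ucp_trans with a.
    + eapply ucp_left; eauto. now apply ucp_init.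
    + rewrite neg_neg in IHucp; exact IHucp.
Qed.

Definition dec (P : Prop) : bool := if excluded_middle_informative P then true else false.

Lemma dec_true : forall P, dec P = true <-> P.
Proof. intros P; unfold dec; destruct (excluded_middle_informative P); split; congruence || tauto. Qed.

Lemma filt_len : forall (A : Type) (f : A -> bool) l, length (filter f l) <= length l.
Proof. induction l; simpl; [lia|]. destruct (f a); simpl; lia. Qed.

Lemma sat2 : forall n (F : cnf), length F <= n ->
  (forall l, ucp F (fun l' => l' = l) (neg l) -> ucp F (fun l' => l' = neg l) l -> False) ->
  exists s, forall c, In c F -> clause_true s c.
Proof.
  induction n as [|n IH]; intros F Hlen Hnc.
  - destruct F; [|simpl in Hlen; lia]. exists (fun _ => true); intros c [].
  - destruct F as [|c0 rest].
    + exists (fun _ => true); intros c [].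
    + set (F := c0 :: rest) in *.
      assert (Hm : exists m, ~ ucp F (fun l' => l' = m) (neg m) /\ (m = fst c0 \/ m = neg (fst c0))).
      { destruct (classic (ucp F (fun l' => l' = fst c0) (neg (fst c0)))) as [H|H].
        - exists (neg (fst c0)); split; [|now right]. rewrite neg_neg. intro H'. eapply Hnc; eauto.
        - exists (fst c0); split; auto. }
      destruct Hm as [m [Hm Hmc]].
      set (R := fun k => ucp F (fun l' => l' = m) k).
      assert (Hcons : forall k, R k -> R (neg k) -> False).
      { intros k H1 H2. apply Hm. apply ucp_trans with k; auto.
        apply ucp_contra in H2. rewrite neg_neg in H2. exact H2. }
      assert (Hclr : forall a b, In (a,b) F -> R (neg a) -> R b).
      { intros a b Hin H. eapply ucp_right; eauto. }
      assert (Hcll : forall a b, In (a,b) F -> R (neg b) -> R a).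
      { intros a b Hin H. eapply ucp_left; eauto. }
      set (f := fun c : clause => negb (dec (R (fst c))) && negb (dec (R (snd c)))).
      set (F' := filter f F).
      assert (HF' : forall c, In c F' <-> In c F /\ ~ R (fst c) /\ ~ R (snd c)).
      { intro c; unfold F'; rewrite filter_In; unfold f.
        pose proof (dec_true (R (fst c))) as D1; pose proof (dec_true (R (snd c))) as D2.
        destruct (dec (R (fst c))); destruct (dec (R (snd c))); simpl.
        all: rewrite ?andb_true_r, ?andb_false_r.
        all: split; [intros [? ?]|intros [? [? ?]]].
        all: first [discriminate | tauto | exfalso; tauto | idtac].
        all: try (split; [assumption|]).
        all: try (exfalso; match goal with H : ~ _ |- _ => apply H end; first [apply D1|apply D2]; reflexivity).
        all: try (split; intro Hx; [apply D1 in Hx|apply D2 in Hx]; discriminate). }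
      assert (Hc0 : f c0 = false).
      { destruct c0 as [a b]. unfold f; simpl in *.
        destruct Hmc as [Hmc|Hmc].
        - assert (R a) by (subst; apply ucp_init; reflexivity).
          apply (proj2 (dec_true _)) in H; rewrite H; reflexivity.
        - assert (R b).
          { apply Hclr with a; [left; reflexivity|]. subst; apply ucp_init; reflexivity. }
          apply (proj2 (dec_true _)) in H; rewrite H. destruct (dec (R a)); reflexivity. }
      assert (Hlen' : length F' <= n).
      { unfold F', F; simpl; rewrite Hc0. simpl in Hlen.
        assert (length (filter f rest) <= length rest).
        { apply filt_len. }
        lia. }
      destruct (IH F' Hlen') as [s' Hs'].
      { intros l H1 H2. apply (Hnc l).
        - eapply ucp_mono; [|exact H1]. intros c Hc; apply HF' in Hc; tauto.
        - eapply ucp_mono; [|exact H2]. intros c Hc; apply HF' in Hc; tauto. }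
      set (s := fun x => if dec (R (Pos x)) then true else if dec (R (Neg x)) then false else s' x).
      assert (HR : forall k, R k -> lit_true s k = true).
      { intros [x|x] H; simpl; unfold s.
        - apply (proj2 (dec_true _)) in H; rewrite H; reflexivity.
        - destruct (dec (R (Pos x))) eqn:E.
          + apply (proj1 (dec_true _)) in E. exfalso; exact (Hcons _ H E).
          + apply (proj2 (dec_true _)) in H; rewrite H; reflexivity. }
      assert (HnR : forall k, ~ R k -> ~ R (neg k) -> lit_true s k = lit_true s' k).
      { intros [x|x] H1 H2; simpl in *; unfold s;
        destruct (dec (R (Pos x))) eqn:E1; try (apply (proj1 (dec_true _)) in E1; tauto);
        destruct (dec (R (Neg x))) eqn:E2; try (apply (proj1 (dec_true _)) in E2; tauto); reflexivity. }
      exists s. intros [a b] Hin.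
      destruct (classic (R a)) as [Ha|Ha]; [left; now apply HR|].
      destruct (classic (R b)) as [Hb|Hb]; [right; now apply HR|].
      assert (In (a,b) F') by (apply HF'; auto).
      destruct (Hs' _ H) as [H'|H']; simpl in *; [left|right].
      * rewrite HnR; auto. intro Hn; apply Hb; eapply Hclr; eauto.
      * rewrite HnR; auto. intro Hn; apply Ha; eapply Hcll; eauto.
Qed.

Lemma V0_of : forall Phi L k, ucp Phi L k -> ucp Phi L (neg k) -> V0 Phi L (var k).
Proof. intros Phi L [x|x] H1 H2; split; auto. Qed.

Theorem fact2p2 : forall Phi : cnf, is_2cnf Phi -> satisfiable (in_pruned Phi).
Proof.
  intros Phi _.
  set (F := filter (fun c => negb (dec (pruned_away Phi c))) Phi).
  assert (HF : forall c, In c F <-> in_pruned Phi c).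
  { intro c; unfold F, in_pruned; rewrite filter_In.
    destruct (dec (pruned_away Phi c)) eqn:E; simpl.
    - apply (proj1 (dec_true _)) in E; intuition.
    - split; [intros [H _]; split; auto; intro H'; apply (proj2 (dec_true _)) in H'; congruence|].
      intros [H _]; auto. }
  assert (Hsub : forall c, In c F -> In c Phi) by (intros c Hc; apply HF in Hc; apply Hc).
  destruct (sat2 (length F) F (le_n _)) as [s Hs].
  - intros l H1 H2.
    inversion H1 as [l0 Hl0 | a b Hin Hnb | a b Hin Hna]; subst.
    + destruct l; discriminate.
    + (* clause (neg l, b), with l ->* neg b *)
      apply HF in Hin. destruct Hin as [HinP Hnp]. apply Hnp.
      exists l. split.
      { exists (neg l, b); split; auto. simpl; left; destruct l; reflexivity. }
      split; auto.
      assert (T1 : forall k, ucp F (fun l' => l' = l) k -> ucp F (fun l' => l' = k) l ->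
                V0 Phi (fun l' => l' = l) (var k)).
      { intros k K1 K2. apply V0_of.
        - eapply ucp_mono; [exact Hsub|exact K1].
        - apply ucp_contra in K2. eapply ucp_mono; [exact Hsub|].
          apply ucp_trans with (neg l); auto. }
      intros x Hx; simpl in Hx. destruct Hx as [Hx|[Hx|[]]]; subst x.
      * replace (var (neg l)) with (var (neg l)) by reflexivity. apply T1; auto.
      * replace (var b) with (var (neg b)) by (destruct b; reflexivity). apply T1; auto.
        apply ucp_trans with (neg l); auto.
        eapply ucp_left; [apply HF; split; eauto|]. apply ucp_init; reflexivity.
    + apply HF in Hin. destruct Hin as [HinP Hnp]. apply Hnp.
      exists l. split.
      { exists (a, neg l); split; auto. simpl; right; left; destruct l; reflexivity. }
      split; auto.
      assert (T1 : forall k, ucp F (fun l' => l' = l) k -> ucp F (fun l' => l' = k) l ->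
                V0 Phi (fun l' => l' = l) (var k)).
      { intros k K1 K2. apply V0_of.
        - eapply ucp_mono; [exact Hsub|exact K1].
        - apply ucp_contra in K2. eapply ucp_mono; [exact Hsub|].
          apply ucp_trans with (neg l); auto. }
      intros x Hx; simpl in Hx. destruct Hx as [Hx|[Hx|[]]]; subst x.
      * replace (var a) with (var (neg a)) by (destruct a; reflexivity). apply T1; auto.
        apply ucp_trans with (neg l); auto.
        eapply ucp_right; [apply HF; split; eauto|]. apply ucp_init; reflexivity.
      * apply T1; auto.
  - exists s. intros c Hc. apply Hs. now apply HF.
Qed.
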